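(* Let $X$ be an extensible marked Dynkin diagram with $d$ nodes and let $n\ge d$ be such that $\det(X_n)\ne0$. Fix $i$ with $1\le i\le n$ and write $\omega_i^{(n)}=\sum_{k=1}^n c_k\alpha_k^{(n)}$. Then $a_i=\det(X_n)\,c_n$.
   Context: A marked Dynkin diagram $X$ has nodes $1,\dots,d$ with node $d$ distinguished and symmetrizable generalized Cartan matrix $C(X)$. For $m\ge d$, $X_m$ is obtained by attaching a simply-laced chain of new nodes $d+1,\dots,m$ to node $d$ (so $C(X_m)$ has $C(X)$ as upper-left block, $2$ on the remaining diagonal, $-1$ in positions $(i,i+1),(i+1,i)$ for $d\le i<m$, $0$ elsewhere); $X_{d-1}$ denotes $X$ with node $d$ and its edges deleted. $\det(Y)$ is the determinant of the generalized Cartan matrix of $Y$. The sequence $\det(X_m)$, $m\ge d$, is arithmetic with common difference $\Delta$; $X$ is extensible if $\Delta\ne0$, $\det(X)\ne0$ and $\gcd(\Delta,\det X)=1$. For $\mathfrak g(X_n)$: simple roots $\alpha_k^{(n)}$ and fundamental weights $\omega_i^{(n)}$. The integers $a_i$ are defined by: for $1\le i\le d$, $a_i=\det(X)\,(C(X)^{-1})_{d\,i}$ (equivalently $\det(X)\check\omega_d=\sum_{i=1}^d a_i\check\alpha_i$, where $\check\alpha_i$ are the simple coroots of $X$ and $\check\omega_d$ is the element of their span with $\alpha_j(\check\omega_d)=\delta_{jd}$); for $i>d$, $a_i=\det(X_{i-1})$. *)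

(* Defs.v *)
From mathcomp Require Import all_boot all_order all_algebra.
Set Implicit Arguments. Unset Strict Implicit. Unset Printing Implicit Defensive.
Import Order.TTheory GRing.Theory Num.Theory.
Local Open Scope ring_scope.

(* A marked Dynkin diagram X with d nodes is given by its generalized Cartan
   matrix C : 'M[int]_d, with Kac's convention C i j = alpha_j(coroot alpha_i).
   Nodes 1..d are indexed 0..d-1 (0-based); the distinguished node d is index d-1. *)

Definition symmetrizable_gcm (d : nat) (C : 'M[int]_d) : Prop :=
  [/\ (forall i, C i i = 2),
      (forall i j, i != j -> C i j <= 0),
      (forall i j, (C i j == 0) = (C j i == 0)) &
      exists D : 'I_d -> rat, (forall i, 0 < D i) /\
        (forall i j, D i * (C i j)%:~R = D j * (C j i)%:~R)].

(* Entry (p,q) (0-based, as nats) of C(X_m): the upper-left d x d block is C,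
   2 on remaining diagonal, -1 at (p,p+1),(p+1,p) for d-1 <= p (chain attached to
   node d), 0 elsewhere.  For m <= d this is the leading principal m x m block,
   so X_{d-1} is X with node d deleted. *)
Definition ext_entry (d : nat) (C : 'M[int]_d) (p q : nat) : int :=
  match @insub nat (fun k => k < d)%N _ p, @insub nat (fun k => k < d)%N _ q with
  | Some p', Some q' => C p' q'
  | _, _ => if p == q then 2
            else if ((p.+1 == q) || (q.+1 == p)) && (d.-1 <= minn p q)%N then -1
            else 0
  end.

Definition cartan_ext (d : nat) (C : 'M[int]_d) (m : nat) : 'M[int]_m :=
  \matrix_(p < m, q < m) ext_entry C p q.

Definition detX (d : nat) (C : 'M[int]_d) (m : nat) : int := \det (cartan_ext C m).

(* common difference of the arithmetic sequence det(X_m), m >= d *)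
Definition DeltaX (d : nat) (C : 'M[int]_d) : int := detX C d.+1 - detX C d.

Definition extensible (d : nat) (C : 'M[int]_d) : Prop :=
  [/\ DeltaX C != 0, \det C != 0 & gcdz (DeltaX C) (\det C) = 1].

Definition mx_at (d : nat) (A : 'M[rat]_d) (p q : nat) : rat :=
  match @insub nat (fun k => k < d)%N _ p, @insub nat (fun k => k < d)%N _ q with
  | Some p', Some q' => A p' q'
  | _, _ => 0
  end.

(* a_i for 1-based i: for 1 <= i <= d, a_i = det(X) (C(X)^{-1})_{d i};
   for i > d, a_i = det(X_{i-1}). *)
Definition a_coef (d : nat) (C : 'M[int]_d) (i : nat) : rat :=
  if (i <= d)%N then
    (\det C)%:~R * mx_at (invmx (map_mx (fun z : int => z%:~R : rat) C)) d.-1 i.-1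
  else (detX C i.-1)%:~R.

(* Main.v *)
Require Import Defs.
From mathcomp Require Import all_boot all_order all_algebra.
From mathcomp Require Import zify.
Import Order.TTheory GRing.Theory Num.Theory.
Set Implicit Arguments. Unset Strict Implicit.
Local Open Scope ring_scope.

Definition G m (f : nat -> nat -> int) : 'M[int]_m := \matrix_(p < m, q < m) f p q.

Lemma G_eq m f g : (forall p q, (p < m)%N -> (q < m)%N -> f p q = g p q) -> G m f = G m g.
Proof. by move=> H; apply/matrixP => p q; rewrite !mxE H. Qed.

Lemma minorG m f (i0 j0 : 'I_m.+1) :
  row' i0 (col' j0 (G m.+1 f)) = G m (fun p q => f (bump i0 p) (bump j0 q)).
Proof. by apply/matrixP => p q; rewrite !mxE. Qed.

Lemma det_last m f : (forall q, (q < m)%N -> f m q = 0) ->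
  \det (G m.+1 f) = f m m * \det (G m f).
Proof.
move=> H; rewrite (expand_det_row _ ord_max) big_ord_recr /= big1 ?add0r.
  rewrite mxE /cofactor minorG.
  have -> : (-1) ^+ (@ord_max m + @ord_max m)%N = 1 :> int.
    by rewrite -signr_odd oddD addbb.
  rewrite mul1r.
  have E : G m (fun p q : nat => f (bump (@ord_max m) p) (bump (@ord_max m) q)) = G m f.
    apply: G_eq => p q hp hq.
    have b1 : bump (@ord_max m) p = p by rewrite /bump /= leqNgt hp.
    have b2 : bump (@ord_max m) q = q by rewrite /bump /= leqNgt hq.
    by rewrite b1 b2.
  by rewrite E.
move=> j _; have := H _ (ltn_ord j); rewrite mxE /= => ->; by rewrite mul0r.
Qed.

Section S.
Variables (d : nat) (C : 'M[int]_d).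
Let E := ext_entry C.

Lemma E_out p q : (d <= p)%N -> E p q =
  if p == q then 2
  else if ((p.+1 == q) || (q.+1 == p)) && (d.-1 <= minn p q)%N then -1 else 0.
Proof.
move=> hp; rewrite /E /ext_entry.
by rewrite (@insubN _ (fun k => k < d)%N) // -leqNgt.
Qed.

Definition Dm m i0 := \det (G m (fun p q => E (bump i0 p) q)).

Lemma Dm_step m i0 : (d <= m.+1)%N -> (i0 <= m)%N -> Dm m.+1 i0 = - Dm m i0.
Proof.
move=> hd hi; rewrite /Dm det_last.
  have hb : bump i0 m = m.+1 by rewrite /bump hi.
  rewrite hb E_out //.
  have -> : (m.+1 == m) = false by lia.
  have -> : ((m.+2 == m) || (m.+1 == m.+1)) && (d.-1 <= minn m.+1 m)%N = true by lia.
  by rewrite mulN1r.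
move=> q hq.
have hb : bump i0 m = m.+1 by rewrite /bump hi.
rewrite hb E_out //.
have -> : (m.+1 == q) = false by lia.
have -> : ((m.+2 == q) || (q.+1 == m.+1)) = false by lia.
by [].
Qed.
End S.

Lemma S_const d (C : 'M[int]_d) i0 b k : (i0 <= b)%N -> (d <= b.+1)%N ->
  (-1) ^+ (i0 + (b + k)) * Dm C (b + k) i0 = (-1) ^+ (i0 + b) * Dm C b i0.
Proof.
move=> h1 h2; elim: k => [|k IH]; first by rewrite addn0.
rewrite addnS Dm_step; last by lia. 2: by lia.
by rewrite addnS exprS mulrN mulN1r mulNr opprK IH.
Qed.

Lemma cof_Dm d (C : 'M[int]_d) m i0 : (i0 <= m)%N ->
  cofactor (cartan_ext C m.+1) (inord i0) ord_max = (-1) ^+ (i0 + m) * Dm C m i0.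
Proof.
move=> hi; rewrite /cofactor.
have -> : cartan_ext C m.+1 = G m.+1 (ext_entry C) by [].
rewrite minorG inordK; last by lia.
congr (_ * _); rewrite /Dm; congr (\det _).
apply: G_eq => p q hp hq /=.
have b2 : bump m q = q by rewrite /bump leqNgt hq.
by rewrite b2.
Qed.

Theorem lemma3p7 (d : nat) (C : 'M[int]_d) (n i : nat) (c : nat -> rat) :
  (0 < d)%N -> symmetrizable_gcm C -> extensible C ->
  (d <= n)%N -> detX C n != 0 ->
  (1 <= i <= n)%N ->
  (forall j : 'I_n,
      \sum_(k < n) ((cartan_ext C n j k)%:~R * c k) = (j.+1 == i)%:R) ->
  a_coef C i = (detX C n)%:~R * c n.-1.
Proof.
move=> d0 _ [_ hC _] hdn hn /andP[i1 iin] hsys.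
case: n hdn hn iin hsys => [|n'] hdn hn iin hsys; first by lia.
case: i i1 iin hsys => [//|i'] _ iin hsys.
set M := cartan_ext C n'.+1.
set Mr := map_mx (intr : {rmorphism int -> rat}) M.
have hM : forall j : 'I_n'.+1, \sum_k Mr j k * c k = (j.+1 == i'.+1)%:R.
  by move=> j; rewrite -hsys; apply: eq_bigr => k _; rewrite mxE.
have h1 : (detX C n'.+1)%:~R * c n' = (cofactor M (inord i') ord_max)%:~R.
  transitivity (\sum_l (\adj Mr *m Mr) ord_max l * c l).
    rewrite mul_adj_mx (bigD1 ord_max) //= big1 ?addr0.
      by rewrite mxE eqxx mulr1n det_map_mx.
    by move=> l hl; rewrite mxE eq_sym (negbTE hl) mulr0n mul0r.
  under eq_bigr do rewrite mxE big_distrl.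
  rewrite exchange_big /=.
  transitivity (\sum_j \adj Mr ord_max j * (\sum_l Mr j l * c l)).
    apply: eq_bigr => j _; rewrite big_distrr; apply: eq_bigr => l _; exact: (esym (mulrA _ _ _)).
  under eq_bigr do rewrite hM.
  rewrite (bigD1 (inord i')) //= big1 ?addr0.
    rewrite inordK; last by lia.
    by rewrite eqxx mulr1 mxE cofactor_map_mx.
  move=> j hj; have -> : (j.+1 == i'.+1) = false.
    apply/negbTE; apply: contra hj => /eqP [] hj'.
    by apply/eqP; apply: val_inj; rewrite /= inordK //; lia.
  by rewrite mulr0.
rewrite /= h1 {h1} cof_Dm; last by lia.
pose b := maxn i' d.-1.
have -> : n' = (b + (n' - b))%N by lia.
rewrite S_const; [|lia|lia].
rewrite /a_coef.
case: (leqP i'.+1 d) => hid.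
  have -> : b = d.-1 by lia.
  have [d' hd'] : exists d', d = d'.+1 by exists d.-1; lia.
  subst d => /=.
  rewrite -cof_Dm //.
  have -> : cartan_ext C d'.+1 = C.
    by apply/matrixP => p q; rewrite mxE /ext_entry !valK.
  rewrite /mx_at (insubT (fun k => k < d'.+1)%N (ltnSn d')).
  rewrite (insubT (fun k => k < d'.+1)%N (hid : (i' < d'.+1)%N)).
  set Cr := map_mx _ C.
  have hCr : Cr = map_mx (intr : {rmorphism int -> rat}) C by [].
  have hu : Cr \in unitmx.
    by rewrite unitmxE unitfE hCr det_map_mx intr_eq0.
  rewrite /invmx hu !mxE mulrA.
  rewrite hCr det_map_mx mulfV ?intr_eq0 // mul1r cofactor_map_mx.
  have -> : (Sub i' hid : 'I_d'.+1) = inord i' by apply: val_inj; rewrite /= inordK.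
  have -> : (Sub d' (ltnSn d') : 'I_d'.+1) = ord_max by apply: val_inj.
  by [].
have -> : b = i' by lia.
rewrite -signr_odd oddD addbb expr0 mul1r /Dm.
rewrite (@G_eq i' _ (ext_entry C)); last first.
  move=> p q hp hq /=.
  have b2 : bump i' p = p by rewrite /bump leqNgt hp.
  by rewrite b2.
by [].
Qed.
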